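(* Let $n>k\geq1$, $r=n-k$, and for $i\in[m]$ let $1\leq h_i\leq n-k$ and $k\leq d_i\leq n-h_i$ be integers. Put $\delta_i=\gcd(h_i,d_i-k)$ and $s_i=\frac{d_i-k+\delta_i}{\delta_i}$, with the pairs indexed so that $s_1\leq s_2\leq\cdots\leq s_m$; let $s=\mathrm{lcm}\big(\frac{d_1-k+h_1}{\delta_1},\ldots,\frac{d_m-k+h_m}{\delta_m}\big)$ and $\ell=s\cdot s_m^n$. Let $F$ be a finite field with $|F|\geq s_mn$ and $\lambda_{i,j}$, $i\in[n]$, $j\in[0,s_m-1]$, be $s_mn$ distinct elements of $F$. Let $\mathcal{C}_4$ be the set of all $(\bm c_1,\ldots,\bm c_n)$, $\bm c_i=(c_{i,0},\ldots,c_{i,\ell-1})\in F^\ell$, satisfying $$\sum_{i=1}^n \lambda_{i,a_i}^{t-1} c_{i,(a,b)}=0\quad\text{for all } a\in[0,s_m^n-1],\ b\in[0,s-1],\ t\in[r].$$ Then $\mathcal{C}_4$ is an $(n,k,\ell)$ MDS array code having the $(h_i,d_i)$-optimal repair property for all $i\in[m]$.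
   Context: Notation: $[n]=\{1,\ldots,n\}$, $[i,j]=\{i,\ldots,j\}$. Each $\tau\in[0,\ell-1]$ is written uniquely as $\tau=b\cdot s_m^n+\sum_{i=1}^n a_i s_m^{i-1}$ with $b\in[0,s-1]$, $a_i\in[0,s_m-1]$; we write $a=(a_1,\ldots,a_n)$ and $\tau=(a,b)$, with $c_{i,(a,b)}=c_{i,\tau}$. An $(n,k,\ell)$ MDS array code over $F$ is an $F$-linear set of vectors $(\bm c_1,\ldots,\bm c_n)$, $\bm c_i\in F^\ell$ (node $i$ stores $\bm c_i$), of dimension $k\ell$, such that any $k$ coordinates determine the codeword. The $(h,d)$-optimal repair property means: for every $h$-subset $\mathcal{H}\subseteq[n]$ and every $d$-subset $\mathcal{R}\subseteq[n]\setminus\mathcal{H}$, each helper $j\in\mathcal{R}$ can send $\beta=\frac{h\ell}{d-k+h}$ symbols of $F$ computed from $\bm c_j$ such that from these $\frac{dh\ell}{d-k+h}$ symbols in total all $\bm c_i$, $i\in\mathcal{H}$, are determined, for every codeword (equality in the cut-set bound). *)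

(* Defs.v *)
From HB Require Import structures.
From mathcomp Require Import all_boot all_order all_algebra all_field.
Set Implicit Arguments. Unset Strict Implicit. Unset Printing Implicit Defensive.
Import GRing.Theory.
Local Open Scope ring_scope.

(* Parameters of the m repair pairs (h_i, d_i), 0-indexed: i < m. *)
Definition delta (k : nat) (h d : nat -> nat) (i : nat) : nat :=
  gcdn (h i) (d i - k).
Definition sI (k : nat) (h d : nat -> nat) (i : nat) : nat :=
  ((d i - k + delta k h d i) %/ delta k h d i)%N.
Definition smax (k m : nat) (h d : nat -> nat) : nat := sI k h d m.-1.
Definition sL (k m : nat) (h d : nat -> nat) : nat :=
  \big[lcmn/1%N]_(i < m) ((d i - k + h i) %/ delta k h d i)%N.
Definition ell (n k m : nat) (h d : nat -> nat) : nat :=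
  (sL k m h d * smax k m h d ^ n)%N.

(* a_{i+1} : the (0-indexed) i-th base-s_m digit of tau, where
   tau = b * s_m^n + sum_{i} a_{i+1} s_m^i *)
Definition digit (sm : nat) (i : nat) (tau : nat) : nat :=
  ((tau %/ sm ^ i) %% sm)%N.

(* The code C_4 : codewords are n x ell matrices, row i = node vector c_{i+1}. *)
Definition inC4 (F : fieldType) (n r sm L : nat) (lambda : 'I_n -> nat -> F)
    (c : 'M[F]_(n, L)) : Prop :=
  forall (tau : 'I_L) (t : nat), (t < r)%N ->
    \sum_(i < n) (lambda i (digit sm i tau)) ^+ t * c i tau = 0.

Definition MDS_array_code (F : fieldType) (n k L : nat)
    (C : 'M[F]_(n, L) -> Prop) : Prop :=
  (exists U : {vspace 'M[F]_(n, L)},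
      (forall c, c \in U <-> C c) /\ \dim U = (k * L)%N) /\
  (forall K : {set 'I_n}, #|K| = k ->
     forall c c', C c -> C c' ->
       (forall i, i \in K -> row i c = row i c') -> c = c').

Definition optimal_repair (F : fieldType) (n k L : nat)
    (C : 'M[F]_(n, L) -> Prop) (h d : nat) : Prop :=
  forall HH RR : {set 'I_n}, #|HH| = h -> #|RR| = d -> [disjoint HH & RR] ->
  exists g : 'I_n -> 'rV[F]_L -> 'rV[F]_((h * L) %/ (d - k + h)),
    forall c c', C c -> C c' ->
      (forall j, j \in RR -> g j (row j c) = g j (row j c')) ->
      forall i, i \in HH -> row i c = row i c'.

(* Main.v *)
Require Import Defs.
From HB Require Import structures.
From mathcomp Require Import all_boot all_order all_algebra all_field.
From mathcomp Require Import zify.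
Set Implicit Arguments. Unset Strict Implicit. Unset Printing Implicit Defensive.
Import GRing.Theory.

Fixpoint encr (sm n : nat) (a : nat -> nat) (b : nat) : nat :=
  match n with
  | 0 => b
  | n'.+1 => a 0 + sm * encr sm n' (fun i => a i.+1) b
  end.

Lemma encr_ext sm n a a' b : (forall i, i < n -> a i = a' i) ->
  encr sm n a b = encr sm n a' b.
Proof.
elim: n a a' => [//|n IH] a a' H /=.
by rewrite H // (IH (fun i => a i.+1) (fun i => a' i.+1)) // => i hi; apply: H.
Qed.

Lemma encr_lt sm n a b : (forall i, i < n -> a i < sm) ->
  encr sm n a b < sm ^ n * b.+1.
Proof.
elim: n a => [|n IH] a H /=; first by rewrite expn0 mul1n.
have h1 := IH (fun i => a i.+1) (fun i hi => H i.+1 hi).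
have h0 := H 0 isT.
rewrite expnS -mulnA.
set X := encr _ _ _ _ in h1 *.
set Y := sm ^ n * b.+1 in h1 *.
nia.
Qed.

Lemma digit_encr sm n a b i : (forall i, i < n -> a i < sm) -> i < n ->
  digit sm i (encr sm n a b) = a i.
Proof.
rewrite /digit.
elim: n a i => [|n IH] a i H hi //=.
have h0 := H 0 isT.
case: i hi => [|i] hi.
  by rewrite expn0 divn1 mulnC addnC modnMDl modn_small.
rewrite expnS divnMA (addnC (a 0)) (mulnC sm).
rewrite (divnMDl _ _ (leq_ltn_trans (leq0n _) h0)) (divn_small h0) ?addn0.
exact: (IH (fun i => a i.+1) i (fun j hj => H j.+1 hj) hi).
Qed.

Lemma encr_div sm n a b : (forall i, i < n -> a i < sm) ->
  encr sm n a b %/ sm ^ n = b.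
Proof.
elim: n a => [|n IH] a H /=; first by rewrite expn0 divn1.
have h0 := H 0 isT.
rewrite expnS divnMA (addnC (a 0)) (mulnC sm).
rewrite (divnMDl _ _ (leq_ltn_trans (leq0n _) h0)) (divn_small h0) ?addn0.
exact: (IH (fun i => a i.+1) (fun j hj => H j.+1 hj)).
Qed.

Lemma encr_digits sm n t : 0 < sm ->
  t = encr sm n (fun i => digit sm i t) (t %/ sm ^ n).
Proof.
move=> sm0; rewrite /digit.
elim: n t => [|n IH] t /=; first by rewrite expn0 divn1.
rewrite expn0 divn1.
rewrite (@encr_ext _ _ _ (fun i => t %/ sm %/ sm ^ i %% sm)); last first.
  by move=> i _; rewrite -divnMA -expnS.
rewrite expnS divnMA -(IH (t %/ sm)).
by rewrite addnC mulnC -divn_eq.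
Qed.

Local Open Scope ring_scope.
Lemma key_vand (F : finFieldType) (J : finType) (P : pred J) (z w : J -> F) (r : nat) :
  (#|[set z q | q in P]| <= r)%N ->
  (forall t, (t < r)%N -> \sum_(q | P q) z q ^+ t * w q = 0) ->
  forall v, \sum_(q | P q && (z q == v)) w q = 0.
Proof.
move=> hS hsum v.
set S := [set z q | q in P].
case: (boolP (v \in S)) => vS; last first.
  rewrite big1 // => q /andP[Pq /eqP zq]; case/negP: vS; rewrite -zq.
  by apply/imsetP; exists q.
pose Qp := \prod_(y <- enum (S :\ v)) ('X - y%:P).
have szQ : (size Qp <= r)%N.
  rewrite size_prod_XsubC -cardE (cardsD1 v S) vS in hS *.
  by [].
have Qv : Qp.[v] != 0.
  rewrite horner_prod prodf_seq_neq0; apply/allP => y.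
  rewrite mem_enum in_setD1 => /andP[yv _] /=.
  by rewrite hornerXsubC subr_eq0 eq_sym.
have Qz : forall q, P q -> z q != v -> Qp.[z q] = 0.
  move=> q Pq zv; apply/rootP; rewrite root_prod_XsubC mem_enum in_setD1 zv /=.
  by apply/imsetP; exists q.
have H0 : \sum_(q | P q) Qp.[z q] * w q = 0.
  under eq_bigr => q _ do rewrite horner_coef mulr_suml.
  rewrite exchange_big /= big1 // => t _.
  under eq_bigr => q _ do rewrite -mulrA.
  rewrite -mulr_sumr hsum ?mulr0 //.
  exact: leq_trans (ltn_ord t) szQ.
move: H0; rewrite (bigID (fun q => z q == v)) /= [X in _ + X]big1 ?addr0; last first.
  by move=> q /andP[Pq zv]; rewrite Qz ?mul0r.
rewrite (eq_bigr (fun q => Qp.[v] * w q)); last by move=> q /andP[_ /eqP ->].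
rewrite -mulr_sumr => /eqP; rewrite mulf_eq0 (negbTE Qv) /= => /eqP.
by [].
Qed.

Local Close Scope ring_scope.

Section Repair.
Variables (F : finFieldType) (n r sm s Q L : nat) (lambda : 'I_n -> nat -> F).
Variables (HH RR : {set 'I_n}) (de si p h' be : nat).
Hypothesis sm0 : 0 < sm.
Hypothesis QE : Q = sm ^ n.
Hypothesis LE : L = s * Q.
Hypothesis s0 : 0 < s.
Hypothesis p0 : 0 < p.
Hypothesis ps : p %| s.
Hypothesis sism : si <= sm.
Hypothesis si0 : 0 < si.
Hypothesis de0 : 0 < de.
Hypothesis pE : p.+1 = si + h'.
Hypothesis HHc : #|HH| = h' * de.
Hypothesis disj : [disjoint HH & RR].
Hypothesis hcard : #|~: RR| + de * si.-1 <= r.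
Hypothesis beE : be = h' * (s %/ p) * Q.
Hypothesis lam_inj : forall i i' j j', j < sm -> j' < sm ->
  lambda i j = lambda i' j' -> i = i' /\ j = j'.

Lemma Q0 : 0 < Q. Proof. by rewrite QE expn_gt0 sm0. Qed.
Lemma L0 : 0 < L. Proof. by rewrite LE muln_gt0 s0 Q0. Qed.

Definition o0 : 'I_L := Ordinal L0.
Definition idx (f : 'I_n) := index f (enum HH).
Definition grp f := idx f %/ de.
Definition inG g (f : 'I_n) := (f \in HH) && (grp f == g).
Definition inGn g (i : nat) := [exists f : 'I_n, (val f == i) && inG g f].
Definition Aq q := q %% Q.
Definition gq q := (q %/ Q) %% h'.
Definition b0q q := (q %/ Q) %/ h'.
Definition bet g k := if k is k'.+1 then h' + k' else g.
Definition dq q k i := (digit sm i (Aq q) + (if inGn (gq q) i then k else 0)) %% sm.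
Definition tk q k := encr sm n (dq q k) (b0q q * p + bet (gq q) k).
Definition tko q k : 'I_L := insubd o0 (tk q k).

Lemma inGnE g (f : 'I_n) : inGn g f = inG g f.
Proof.
apply/existsP/idP => [[f' /andP[/eqP/val_inj -> //]] | H].
by exists f; rewrite eqxx H.
Qed.

Lemma dq_lt q k i : dq q k i < sm.
Proof. exact: ltn_pmod. Qed.

Lemma h'p : h' <= p.
Proof. lia. Qed.

Lemma tk_lt q k : q < be -> k < si -> tk q k < L.
Proof.
move=> qbe ksi.
have hb : b0q q * p + bet (gq q) k < s.
  have hq : q %/ Q < h' * (s %/ p) by rewrite ltn_divLR ?Q0 // -beE.
  have h'0 : 0 < h' by move: hq; case: (h') => //; rewrite mul0n.
  have hb0 : b0q q < s %/ p by rewrite /b0q ltn_divLR // mulnC.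
  have hg : gq q < h' by exact: ltn_pmod.
  have hbet : bet (gq q) k < p by case: k ksi => [|k'] /= ksi; lia.
  have : (b0q q).+1 * p <= s %/ p * p by rewrite leq_mul2r hb0 orbT.
  rewrite divnK // => H; apply: leq_trans H.
  by rewrite mulSn (addnC p) ltn_add2l.
rewrite /tk LE; apply: leq_trans (@encr_lt sm n (dq q k) _ _) _.
  by move=> i _; exact: dq_lt.
by rewrite -QE mulnC leq_mul2r hb orbT.
Qed.

Lemma tkoE q k : q < be -> k < si -> val (tko q k) = tk q k.
Proof. by move=> qbe ksi; rewrite val_insubd tk_lt. Qed.

Lemma digit_tko q k (i : 'I_n) : q < be -> k < si -> digit sm i (tko q k) = dq q k i.
Proof.
move=> qbe ksi; rewrite tkoE // /tk digit_encr //.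
by move=> j _; exact: dq_lt.
Qed.

Lemma div_tko q k : q < be -> k < si -> tko q k %/ Q = b0q q * p + bet (gq q) k.
Proof.
move=> qbe ksi; rewrite tkoE // /tk QE encr_div //.
by move=> j _; exact: dq_lt.
Qed.

Lemma dq_notG q k (i : 'I_n) : ~~ inG (gq q) i -> dq q k i = dq q 0 i.
Proof. by move=> H; rewrite /dq inGnE (negbTE H). Qed.

Lemma cardG g : #|[set f | inG g f]| <= de.
Proof.
pose fo (f : 'I_n) : 'I_de := Ordinal (ltn_pmod (idx f) de0).
rewrite -(@card_in_imset _ _ fo); last first.
  move=> f1 f2; rewrite !inE => /andP[f1H /eqP g1] /andP[f2H /eqP g2] /(congr1 val) /= hm.
  have e : idx f1 = idx f2.
    by rewrite (divn_eq (idx f1) de) (divn_eq (idx f2) de) hm -/(grp f1) -/(grp f2) g1 g2.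
  have m1 : f1 \in enum HH by rewrite mem_enum.
  have m2 : f2 \in enum HH by rewrite mem_enum.
  by rewrite -(nth_index f1 m1) -(nth_index f1 m2) -/(idx f1) -/(idx f2) e.
by apply: leq_trans (max_card _) _; rewrite card_ord.
Qed.

Lemma grp_lt f : f \in HH -> grp f < h'.
Proof.
move=> fH; rewrite /grp ltn_divLR // -HHc cardE /idx index_mem mem_enum //.
Qed.

Lemma notRR f : f \in HH -> f \notin RR.
Proof.
by move=> fH; rewrite (disjointFr disj fH).
Qed.

Lemma through (tau : 'I_L) g k : (g < h')%N -> (k < si)%N ->
  (tau %/ Q) %% p = bet g k ->
  exists2 q, (q < be)%N & gq q = g /\ tko q k = tau.
Proof.
move=> gh ksi hb1.
pose a := fun i => digit sm i tau.
pose b := tau %/ Q.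
pose a' := fun i => if inGn g i then (a i + (sm - k)) %% sm else a i.
have alt : forall i, (a i < sm)%N by move=> i; exact: ltn_pmod.
have a'lt : forall i, (i < n)%N -> (a' i < sm)%N.
  by move=> i _; rewrite /a'; case: ifP => _; [exact: ltn_pmod | exact: alt].
pose A := encr sm n a' 0.
have AQ : (A < Q)%N by rewrite QE -[X in (_ < X)%N]muln1; exact: encr_lt.
have hb : (b < s)%N by rewrite ltn_divLR ?Q0 // -LE.
pose b0 := b %/ p.
have hb0 : (b0 < s %/ p)%N by rewrite ltn_divLR // divnK.
have h'0 : (0 < h')%N by case: (h') gh.
have Q0' := Q0.
have qQ : ((b0 * h' + g) * Q + A) %/ Q = (b0 * h' + g)%N.
  by rewrite divnMDl // divn_small // addn0.
have qA : ((b0 * h' + g) * Q + A) %% Q = A by rewrite modnMDl modn_small.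
have gq_ : gq ((b0 * h' + g) * Q + A) = g by rewrite /gq qQ modnMDl modn_small.
have b0q_ : b0q ((b0 * h' + g) * Q + A) = b0.
  by rewrite /b0q qQ divnMDl // divn_small // addn0.
have kle : (k < sm)%N by exact: leq_trans ksi sism.
have qbe : ((b0 * h' + g) * Q + A < be)%N.
  rewrite beE.
  have h1 : ((b0 * h' + g).+1 <= h' * (s %/ p))%N.
    have H2 : (b0.+1 * h' <= s %/ p * h')%N by rewrite leq_mul2r hb0 orbT.
    rewrite (mulnC h' (s %/ p)); apply: leq_trans H2.
    by rewrite mulSn (addnC h') -addnS leq_add2l.
  have H3 : ((b0 * h' + g).+1 * Q <= h' * (s %/ p) * Q)%N by rewrite leq_mul2r h1 orbT.
  apply: leq_trans H3.
  by rewrite mulSn (addnC Q) ltn_add2l.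
exists ((b0 * h' + g) * Q + A) => //; split => //.
apply: val_inj; rewrite tkoE // /tk gq_ b0q_ -hb1 -/b -divn_eq.
transitivity (encr sm n a b); last first.
  by rewrite /b QE; exact: (esym (encr_digits _ _ sm0)).
apply: encr_ext => i ilt.
rewrite /dq /Aq qA gq_ /A digit_encr // /a'.
case: ifP => _; last by rewrite addn0 modn_small.
by rewrite modnDml -addnA subnK 1?ltnW // modnDr modn_small.
Qed.


Local Open Scope ring_scope.

Lemma line (e : 'M[F]_(n, L)) q : (q < be)%N -> inC4 r sm lambda e ->
  (forall j, j \in RR -> \sum_(k < si) e j (tko q k) = 0) ->
  (forall f (k : 'I_si), inG (gq q) f -> e f (tko q k) = 0) /\
  (forall f, f \in HH -> ~~ inG (gq q) f -> \sum_(k < si) e f (tko q k) = 0).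
Proof.
move=> qbe eC hR.
pose P := fun x : 'I_n * 'I_si => x.1 \notin RR.
pose z := fun x : 'I_n * 'I_si => lambda x.1 (dq q x.2 x.1).
pose w := fun x : 'I_n * 'I_si => e x.1 (tko q x.2).
have GH : forall g f, inG g f -> f \in HH by move=> g f /andP[].
have hsum : forall t, (t < r)%N -> \sum_(x | P x) z x ^+ t * w x = 0.
  move=> t tr.
  have H0 : \sum_(k < si) \sum_(i < n)
      lambda i (digit sm i (tko q k)) ^+ t * e i (tko q k) = 0.
    by apply: big1 => k _; apply: eC.
  rewrite exchange_big /= (bigID (fun i => i \in RR)) /= in H0.
  rewrite [X in X + _]big1 ?add0r in H0; last first.
    move=> i iR.
    have niG : ~~ inG (gq q) i.
      by apply/negP => /GH /notRR; rewrite iR.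
    rewrite (eq_bigr (fun k : 'I_si => lambda i (dq q 0 i) ^+ t * e i (tko q k))); last first.
      by move=> k _; rewrite digit_tko // dq_notG.
    by rewrite -mulr_sumr hR ?mulr0.
  rewrite (pair_big_dep (fun i => i \notin RR) (fun _ _ => true)) /= in H0.
  rewrite -[in RHS]H0.
  apply: congr_big => // [x|x _]; first by rewrite andbT.
  by rewrite /z /w digit_tko.
have hc : (#|[set z x | x in P]| <= r)%N.
  set G := [set f | inG (gq q) f].
  have sub : [set z x | x in P] \subset
      [set lambda i (dq q 0 i) | i in ~: RR :\: G] :|:
      [set z x | x in [set x : 'I_n * 'I_si | x.1 \in G]].
    apply/subsetP => v /imsetP[x Px ->]; rewrite inE.
    case: (boolP (x.1 \in G)) => xG.
      by apply/orP; right; apply/imsetP; exists x => //; rewrite inE.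
    apply/orP; left; apply/imsetP; exists x.1.
      by rewrite in_setD xG in_setC /=; exact: Px.
    by rewrite /z dq_notG //; move: xG; rewrite inE.
  apply: leq_trans (subset_leq_card sub) _.
  apply: leq_trans (leq_card_setU _ _).1 _.
  apply: leq_trans (leq_add (leq_imset_card _ _) (leq_imset_card _ _)) _.
  have e1 : #|[set x : 'I_n * 'I_si | x.1 \in G]| = (#|G| * si)%N.
    rewrite -[in RHS](card_ord si) -cardsT -cardsX; apply: eq_card => x.
    by case: x => x1 x2; rewrite in_set in_setX in_setT andbT.
  have e2 : (#|~: RR :\: G| + #|G|)%N = #|~: RR|.
    have GsubR : G \subset ~: RR.
      by apply/subsetP => f; rewrite !inE => /GH /notRR.
    by rewrite -(cardsID G (~: RR)) (setIidPr GsubR) addnC.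
  have cG := cardG (gq q).
  have := leq_mul cG (leqnn si.-1).
  rewrite e1 -/G in cG *.
  have -> : (#|G| * si = #|G| + #|G| * si.-1)%N by rewrite -mulnS prednK.
  move=> hle; have hc2 := hcard; rewrite -e2 in hc2.
  by rewrite addnA; apply: leq_trans hc2; rewrite leq_add2l.
have K := key_vand hc hsum.
split.
- move=> f k fG; have := K (z (f, k)).
  rewrite (eq_bigl (fun x => x == (f, k))) ?big_pred1_eq //.
  move=> x; rewrite /P /z; apply/andP/eqP => [[xR /eqP] | ->]; last first.
    by rewrite notRR ?eqxx // (GH _ _ fG).
  case/lam_inj; [exact: dq_lt | exact: dq_lt | ] => /= e1 e2.
  move: e2; rewrite e1 /dq inGnE fG => /eqP.
  rewrite eqn_modDl !modn_small ?(leq_trans (ltn_ord _) sism) // => /eqP hk.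
  by case: x xR e1 hk => x1 x2 /= _ -> /val_inj ->.
- move=> f fH nG; have := K (lambda f (dq q 0 f)).
  rewrite (eq_bigl (fun x => (x.1 == f) && true)); last first.
    move=> x; rewrite andbT /P /z; apply/andP/eqP => [[_ /eqP] | e1].
      by case/lam_inj; [exact: dq_lt | exact: dq_lt | ].
    by rewrite e1 notRR // dq_notG // eqxx.
  have E : \sum_(x | (x.1 == f) && true) w x = \sum_(k < si) e f (tko q k).
    rewrite /w -(pair_big_dep (fun i : 'I_n => i == f) (fun (_ : 'I_n) (_ : 'I_si) => true) (fun (i : 'I_n) (k : 'I_si) => e i (tko q k))).
    by rewrite big_pred1_eq.
  by rewrite E.
Qed.

Lemma zero_HH (e : 'M[F]_(n, L)) : inC4 r sm lambda e ->
  (forall q, (q < be)%N -> forall j, j \in RR -> \sum_(k < si) e j (tko q k) = 0) ->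
  forall f, f \in HH -> forall tau : 'I_L, e f tau = 0.
Proof.
move=> eC hR f fH.
have gf := grp_lt fH.
have fG : inG (grp f) f by rewrite /inG fH eqxx.
have b1p : forall tau : 'I_L, (((tau %/ Q) %% p)%N < p)%N by move=> tau; exact: ltn_pmod.
have claim1 : forall tau : 'I_L,
    (((tau %/ Q) %% p)%N == grp f) || (h' <= ((tau %/ Q) %% p)%N)%N -> e f tau = 0.
  move=> tau hb1.
  have hp := b1p tau.
  set b1 := ((tau %/ Q) %% p)%N in hb1 hp.
  pose k := if b1 == grp f then 0%N else (b1 - h').+1%N.
  have ksi : (k < si)%N.
    rewrite /k; case: eqP => [_|ne] //.
    move: hb1; rewrite (introF eqP ne) /= => hb1.
    have := pE; lia.
  have kb : ((tau %/ Q) %% p)%N = bet (grp f) k.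
    rewrite -/b1 /k; case: eqP => [-> //|ne].
    move: hb1; rewrite (introF eqP ne) /= => hb1.
    rewrite /bet; lia.
  have [q qbe [gq_ tq]] := through gf ksi kb.
  have [La _] := line qbe eC (hR q qbe).
  rewrite -tq; apply: (La f (Ordinal ksi)).
  by rewrite gq_.
move=> tau.
case: (boolP ((((tau %/ Q) %% p)%N == grp f) || (h' <= ((tau %/ Q) %% p)%N)%N)) => [|hn].
  exact: claim1.
move: hn; rewrite negb_or -ltnNge => /andP[ne b1h].
have [q qbe [gq_ tq]] := @through tau (((tau %/ Q) %% p)%N) 0 b1h si0 erefl.
have [_ Lb] := line qbe eC (hR q qbe).
have nG : ~~ inG (gq q) f by rewrite /inG fH gq_ eq_sym.
have := Lb f fH nG.
rewrite -(prednK si0) big_ord_recl /= tq big1 ?addr0 //.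
move=> k _; apply: claim1; apply/orP; right.
have kl : (bump 0 k < si)%N by rewrite /bump /= add1n -[X in (_ < X)%N](prednK si0) ltnS ltn_ord.
rewrite div_tko // modnMDl /bump /= modn_small.
  exact: leq_addr.
have := ltn_ord k; have := pE; lia.
Qed.

Lemma repair_main :
  exists g : 'I_n -> 'rV[F]_L -> 'rV[F]_be,
    forall c c', inC4 r sm lambda c -> inC4 r sm lambda c' ->
      (forall j, j \in RR -> g j (row j c) = g j (row j c')) ->
      forall i, i \in HH -> row i c = row i c'.
Proof.
exists (fun _ x => \row_(q < be) \sum_(k < si) x ord0 (tko q k)).
move=> c c' cC c'C hg i iH; apply/rowP => tau; rewrite !mxE.
apply/eqP; rewrite -subr_eq0; apply/eqP.
suff : (c - c') i tau = 0 by rewrite !mxE.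
apply: (zero_HH _ _ iH).
  move=> t' tt tr.
  under eq_bigr do rewrite !mxE mulrBr.
  by rewrite sumrB cC ?c'C ?subr0.
move=> q qbe j jR.
have := congr1 (fun v : 'rV[F]_be => v ord0 (Ordinal qbe)) (hg j jR); rewrite !mxE /= => hq.
under eq_bigr do rewrite !mxE.
rewrite sumrB; apply/eqP; rewrite subr_eq0; apply/eqP.
move: hq.
under eq_bigr do rewrite mxE.
by under [in RHS]eq_bigr do rewrite mxE.
Qed.

End Repair.

Local Open Scope ring_scope.

Lemma determine (F : finFieldType) n r sm L (lambda : 'I_n -> nat -> F)
    (K : {set 'I_n}) (e : 'M[F]_(n, L)) : (0 < sm)%N ->
  (forall i i' j j', (j < sm)%N -> (j' < sm)%N ->
     lambda i j = lambda i' j' -> i = i' /\ j = j') ->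
  (#|~: K| <= r)%N -> inC4 r sm lambda e ->
  (forall i, i \in K -> forall tau, e i tau = 0) -> e = 0.
Proof.
move=> sm0 inj hK eC eK; apply/matrixP => i tau; rewrite mxE.
case: (boolP (i \in K)) => iK; first exact: eK.
pose z := fun j : 'I_n => lambda j (digit sm j tau).
have hc : (#|[set z j | j in [pred j | j \notin K]]| <= r)%N.
  apply: leq_trans (leq_imset_card _ _) _.
  by rewrite (eq_card (B := ~: K)) // => j; rewrite !inE.
have hs : forall t, (t < r)%N ->
    \sum_(j | [pred j | j \notin K] j) z j ^+ t * e j tau = 0.
  move=> t tr; rewrite -[RHS](eC tau t tr) [RHS](bigID (fun j => j \notin K)) /=.
  rewrite [X in _ = _ + X]big1 ?addr0 // => j; rewrite negbK => jK.
  by rewrite eK ?mulr0.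
have := key_vand hc hs (z i).
rewrite (eq_bigl (fun j => j == i)) ?big_pred1_eq //.
move=> j /=; apply/andP/eqP => [[_ /eqP /inj []] | ->] //; try exact: ltn_pmod.
Qed.

Definition Phi (F : fieldType) (n r L : nat) (lam : 'I_n -> 'I_L -> F)
  (c : 'M[F]_(n,L)) : 'M[F]_(r,L) :=
  \matrix_(t < r, tau < L) \sum_(i < n) lam i tau ^+ t * c i tau.
Lemma Phi_lin (F : fieldType) (n r L : nat) (lam : 'I_n -> 'I_L -> F) :
  linear (@Phi F n r L lam).
Proof.
move=> a x y; apply/matrixP => t tau; rewrite !mxE mulr_sumr -big_split.
by apply: eq_bigr => i _; rewrite !mxE mulrDr mulrCA.
Qed.
HB.instance Definition _ (F : fieldType) (n r L : nat) (lam : 'I_n -> 'I_L -> F) :=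
  GRing.isLinear.Build F _ _ _ (@Phi F n r L lam) (@Phi_lin F n r L lam).

Lemma MDS_part (F : finFieldType) n k sm L (lambda : 'I_n -> nat -> F) :
  (k <= n)%N -> (0 < sm)%N ->
  (forall i i' j j', (j < sm)%N -> (j' < sm)%N ->
     lambda i j = lambda i' j' -> i = i' /\ j = j') ->
  MDS_array_code k (inC4 (n - k) sm (L := L) lambda).
Proof.
move=> kn sm0 inj.
have detK : forall K : {set 'I_n}, #|K| = k -> forall e : 'M[F]_(n, L),
    inC4 (n - k) sm lambda e -> (forall i, i \in K -> forall tau, e i tau = 0) -> e = 0.
  move=> K cK e eC eK; apply: (determine sm0 inj _ eC eK).
  by rewrite cardsCs card_ord setCK cK.
split; last first.
  move=> K cK c c' cC c'C hrows; apply/eqP; rewrite -subr_eq0; apply/eqP.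
  apply: (detK K cK).
    move=> tau t tr; under eq_bigr do rewrite !mxE mulrBr.
    by rewrite sumrB cC ?c'C ?subr0.
  move=> i iK tau; have := congr1 (fun v : 'rV[F]_L => v ord0 tau) (hrows i iK).
  by rewrite !mxE => ->; rewrite subrr.
pose lam := fun (i : 'I_n) (tau : 'I_L) => lambda i (digit sm i tau).
pose f := linfun (@Phi F n (n - k) L lam).
exists (lker f).
have memU : forall c, c \in lker f <-> inC4 (n - k) sm lambda c.
  move=> c; rewrite memv_ker lfunE /=; split.
    move=> /eqP P0 tau t tr.
    by have := congr1 (fun M : 'M[F]_(n - k, L) => M (Ordinal tr) tau) P0; rewrite !mxE.
  move=> cC; apply/eqP/matrixP => t tau; rewrite !mxE; exact: cC.
split => //.
have low := limg_ker_dim f fullv.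
rewrite capfv dimvf /= in low.
have himg : (\dim (f @: fullv) <= (n - k) * L)%N.
  by apply: leq_trans (dimvS (subvf _)) _; rewrite dimvf.
pose Psel : 'M[F]_(k, n) := \matrix_(a < k, i < n) (i == widen_ord kn a)%:R.
pose g := linfun (mulmx (m := k) (n := n) (p := L) Psel).
have Pc : forall (c : 'M[F]_(n, L)) a tau, (Psel *m c) a tau = c (widen_ord kn a) tau.
  move=> c a tau; rewrite !mxE (bigD1 (widen_ord kn a)) //= !mxE eqxx mul1r.
  by rewrite big1 ?addr0 // => i /negbTE ni; rewrite !mxE ni mul0r.
have cap0 : (lker f :&: lker g = 0)%VS.
  apply/eqP; rewrite -subv0; apply/subvP => c; rewrite memv_cap => /andP[cU].
  rewrite memv_ker lfunE /= => /eqP Pc0; rewrite memv0; apply/eqP.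
  pose K := [set widen_ord kn a | a in 'I_k].
  have cK : #|K| = k.
    rewrite card_imset ?card_ord // => a b /(congr1 val) /= /val_inj //.
  apply: (detK K cK); first by apply/memU.
  move=> i /imsetP[a _ ->] tau.
  by rewrite -Pc Pc0 mxE.
have up := limg_dim_eq cap0.
have up2 : (\dim (lker f) <= k * L)%N.
  by rewrite -up; apply: leq_trans (dimvS (subvf _)) _; rewrite dimvf.
have eL : (n * L = k * L + (n - k) * L)%N by rewrite -mulnDl subnKC.
have low2 : (\dim (lker f) + \dim (limg f) = n * L)%N := low.
apply/eqP; rewrite eqn_leq up2 /= -(leq_add2r (\dim (limg f))) low2 eL leq_add2l.
exact: himg.
Qed.

Theorem theorem5 (F : finFieldType) (n k m : nat) (h d : nat -> nat)
  (lambda : 'I_n -> nat -> F) :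
  (1 <= k)%N -> (k < n)%N -> (0 < m)%N ->
  (forall i, (i < m)%N -> (1 <= h i <= n - k)%N) ->
  (forall i, (i < m)%N -> (k <= d i <= n - h i)%N) ->
  (forall i j, (i <= j)%N -> (j < m)%N -> (sI k h d i <= sI k h d j)%N) ->
  (smax k m h d * n <= #|F|)%N ->
  (forall (i i' : 'I_n) (j j' : nat),
      (j < smax k m h d)%N -> (j' < smax k m h d)%N ->
      lambda i j = lambda i' j' -> i = i' /\ j = j') ->
  let C := inC4 (n - k) (smax k m h d) (L := ell n k m h d) lambda in
  MDS_array_code k C /\
  (forall i, (i < m)%N -> optimal_repair k C (h i) (d i)).
Proof.
move=> k1 kn m0 hh hd hsort _ hinj C.
have de0 : forall i, (i < m)%N -> (0 < delta k h d i)%N.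
  move=> i im; rewrite /delta gcdn_gt0; have /andP[] := hh i im; by move=> ->.
have si0 : forall i, (i < m)%N -> (0 < sI k h d i)%N.
  move=> i im; rewrite /sI divn_gt0 ?de0 //; exact: leq_addl.
have sm0 : (0 < smax k m h d)%N.
  rewrite /smax; apply: si0; by rewrite prednK.
split.
  by apply: MDS_part => //; exact: ltnW.
move=> i im HH RR hH hR disj.
set H := h i in hH *; set D := d i.
set u := (D - k)%N.
set de := gcdn H u.
have deE : delta k h d i = de by [].
have de0i : (0 < de)%N := de0 i im.
have dH : (de %| H)%N := dvdn_gcdl _ _.
have du : (de %| u)%N := dvdn_gcdr _ _.
set h' := (H %/ de)%N.
set u' := (u %/ de)%N.
have HE : H = (h' * de)%N by rewrite divnK.
have uE : u = (u' * de)%N by rewrite divnK.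
have siE : sI k h d i = u'.+1.
  by rewrite /sI deE -/D -/u divnDl // divnn de0i addn1.
set p := ((u + H) %/ de)%N.
have pE' : p = (u' + h')%N by rewrite /p divnDl.
have /andP[H1 Hnk] := hh i im.
have /andP[kD DnH] := hd i im.
have h'0 : (0 < h')%N by rewrite /h' divn_gt0 // dvdn_leq.
set sm := smax k m h d.
set s := sL k m h d.
have sism : (sI k h d i <= sm)%N.
  rewrite /sm /smax; apply: hsort; first by rewrite -ltnS prednK.
  by rewrite prednK.
have s0 : (0 < s)%N.
  rewrite /s /sL; elim/big_ind: _ => // [x y x0 y0|j _].
    by rewrite lcmn_gt0 x0 y0.
  have jm := ltn_ord j.
  have /andP[hj1 _] := hh j jm.
  rewrite divn_gt0 ?de0 //.
  apply: leq_trans (leq_addl _ _); apply: dvdn_leq => //; exact: dvdn_gcdl.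
have ps : (p %| s)%N.
  rewrite /s /sL; apply: (biglcmn_sup (Ordinal im)) => //.
have p0 : (0 < p)%N by rewrite pE'; lia.
have lamI : forall (i0 i' : 'I_n) (j j' : nat), (j < sm)%N -> (j' < sm)%N ->
    lambda i0 j = lambda i' j' -> i0 = i' /\ j = j' := hinj.
have hcard : (#|~: RR| + de * (sI k h d i).-1 <= n - k)%N.
  have := cardsC RR; rewrite card_ord hR siE /= (mulnC de) -uE.
  rewrite /u /D; lia.
have beE : ((H * ell n k m h d) %/ (D - k + H))%N = (h' * (s %/ p) * (sm ^ n))%N.
  have e1 : (D - k + H)%N = (p * de)%N by rewrite divnK // dvdn_add.
  rewrite e1 /ell -/s -/sm.
  rewrite -{1}(divnK ps) HE.
  have -> : (h' * de * (s %/ p * p * sm ^ n))%N = (p * de * (h' * (s %/ p) * sm ^ n))%N.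
    set X := (s %/ p)%N; set Y := (sm ^ n)%N.
    lia.
  by rewrite mulKn // muln_gt0 p0.
have pE : p.+1 = (sI k h d i + h')%N by rewrite pE' siE; lia.
have hHc : #|HH| = (h' * de)%N by rewrite hH -HE.
rewrite /optimal_repair -/H -/D in beE *.
rewrite beE.
exact: (@repair_main F n (n - k) sm s (sm ^ n) (ell n k m h d) lambda HH RR de
  (sI k h d i) p h' _ sm0 erefl erefl s0 p0 ps sism (si0 i im) de0i pE hHc disj hcard
  erefl lamI).
Qed.
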